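(* Under the hypotheses of Theorem 4 with $k>1$ — i.e. $J\subseteq A_n$ a cyclic code with parity-check polynomial $\prod_{i=1}^t h_i$, $c(x)=\prod_{j=1}^k h_{i_j}(x)$ with every $h_{i_j}$ of degree $m_{i_j}$ and order $n_{i_j}\ne q^{m_{i_j}}-1$, $C$ the set of elements of $J$ with minimal polynomial $c$, $n_c=\mathrm{lcm}(n_{i_1},\dots,n_{i_k})$, $d_c=\gcd(q-1,n_c)$, $r_c=n_c/d_c$, $b_c=(q-1)/d_c$, $s_c$ the number of cycles in $C$ and $R_c$ the number of proportionality classes in $C$ — all vectors of $C$ have the same Hamming weight provided at least one of the following holds: (1) $s_c=b_c$; (2) $r_c=R_c$; (3) $\gcd(s_c,R_c)=1$.
   Context: Let $q>2$ be a prime power, $n\ge1$ with $\gcd(n,q)=1$, $A_n=GF(q)[x]/(x^n-1)$ with elements identified with coefficient vectors of polynomials of degree $<n$; Hamming weight = number of nonzero coefficients. $h_i$ are distinct monic irreducible polynomials; the order of $f$ with $f(0)\neq0$ is the least $e\ge1$ with $f\mid x^e-1$. Proportionality class of nonzero $z$: $\{\alpha z:\alpha\in GF(q)^*\}$; cycle: $\{x^iz:i\ge0\}$; minimal polynomial of $z$: $(x^n-1)/\gcd(z(x),x^n-1)$. *)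

(* Defs.v *)
From HB Require Import structures.
From mathcomp Require Import all_boot all_order all_algebra all_field.
Set Implicit Arguments. Unset Strict Implicit. Unset Printing Implicit Defensive.
Import GRing.Theory.
Local Open Scope ring_scope.

Definition xn1 (F : finFieldType) (n : nat) : {poly F} := 'X^n - 1.

(* An element of A_n = GF(q)[x]/(x^n-1) is identified with its coefficient
   vector (row vector of length n); vpoly gives the polynomial of degree < n. *)
Definition vpoly (F : finFieldType) (n : nat) (v : 'rV[F]_n) : {poly F} :=
  \sum_(i < n) v ord0 i *: 'X^i.
Definition pvec (F : finFieldType) (n : nat) (p : {poly F}) : 'rV[F]_n :=
  \row_(i < n) p`_i.

Definition hweight (F : finFieldType) (n : nat) (v : 'rV[F]_n) : nat :=
  #|[set i : 'I_n | v ord0 i != 0]|.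

(* The cyclic code with parity-check polynomial h: the ideal generated by
   g = (x^n-1)/h. *)
Definition cyc_code (F : finFieldType) (n : nat) (h : {poly F}) : {set 'rV[F]_n} :=
  [set v : 'rV[F]_n | (xn1 F n %/ h) %| vpoly v].

Definition min_poly (F : finFieldType) (n : nat) (v : 'rV[F]_n) : {poly F} :=
  let g := gcdp (vpoly v) (xn1 F n) in xn1 F n %/ ((lead_coef g)^-1 *: g).

Definition elts_minpoly (F : finFieldType) (n : nat) (h c : {poly F}) : {set 'rV[F]_n} :=
  [set v in cyc_code n h | min_poly v == c].

Definition prop_class (F : finFieldType) (n : nat) (z : 'rV[F]_n) : {set 'rV[F]_n} :=
  [set a *: z | a in [set a : F | a != 0]].

(* cycle {x^i z : i >= 0} (x^n z = z, so i < n suffices) *)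
Definition cycle_of (F : finFieldType) (n : nat) (z : 'rV[F]_n) : {set 'rV[F]_n} :=
  [set pvec n (('X^i * vpoly z) %% xn1 F n) | i : 'I_n].

Definition num_cycles (F : finFieldType) (n : nat) (C : {set 'rV[F]_n}) : nat :=
  #|[set cycle_of z | z in C]|.
Definition num_prop_classes (F : finFieldType) (n : nat) (C : {set 'rV[F]_n}) : nat :=
  #|[set prop_class z | z in C]|.

Definition poly_order (F : finFieldType) (f : {poly F}) (e : nat) : Prop :=
  [/\ (0 < e)%N, f %| 'X^e - 1 &
      forall e' : nat, (0 < e')%N -> (e' < e)%N -> ~~ (f %| 'X^e' - 1)].

(* Main.v *)
Require Import Defs.
From HB Require Import structures.
From mathcomp Require Import all_boot all_order all_algebra all_field.
Set Implicit Arguments. Unset Strict Implicit. Unset Printing Implicit Defensive.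
Import GRing.Theory.
Local Open Scope ring_scope.

Section Basics.
Variables (F : finFieldType) (n : nat).
Implicit Types (v w z : 'rV[F]_n) (p q : {poly F}).

Lemma vpolyE v : vpoly v = rVpoly v.
Proof.
apply/polyP=> j; rewrite coef_rVpoly /vpoly coef_sum.
case: insubP => [i _ <-|].
- rewrite (bigD1 i) //= coefZ coefXn eqxx mulr1 big1 ?addr0 // => k kn.
  rewrite coefZ coefXn; case: eqP => [/val_inj ik|]; last by rewrite mulr0.
  by rewrite ik eqxx in kn.
- move=> jn; rewrite big1 // => k _; rewrite coefZ coefXn.
  case: eqP => [jk|]; last by rewrite mulr0.
  by move: jn; rewrite jk ltn_ord.
Qed.

Lemma pvecE p : pvec n p = poly_rV p. Proof. by []. Qed.

Lemma size_vpoly v : (size (vpoly v) <= n)%N.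
Proof. by rewrite vpolyE size_poly. Qed.

Lemma vpolyK v : pvec n (vpoly v) = v.
Proof. by rewrite vpolyE pvecE rVpolyK. Qed.

Lemma pvecK p : (size p <= n)%N -> vpoly (pvec n p) = p.
Proof. by move=> sp; rewrite vpolyE pvecE poly_rV_K. Qed.

Lemma vpolyZ a v : vpoly (a *: v) = a *: vpoly v.
Proof. by rewrite !vpolyE linearZ. Qed.

Lemma pvecZ a p : pvec n (a *: p) = a *: pvec n p.
Proof. by rewrite !pvecE linearZ. Qed.

Lemma vpoly_eq0 v : (vpoly v == 0) = (v == 0).
Proof.
apply/eqP/eqP => [h|->]; last by rewrite vpolyE linear0.
by rewrite -(vpolyK v) h pvecE linear0.
Qed.

End Basics.
Section Mod.
Variables (F : finFieldType) (n : nat).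
Hypothesis n0 : (0 < n)%N.
Local Notation M := (xn1 F n).
Definition Rv (p : {poly F}) : 'rV[F]_n := pvec n (p %% M).
Implicit Types (v w z : 'rV[F]_n) (p q r : {poly F}).

Lemma size_M : size M = n.+1. Proof. by rewrite /xn1 size_Xn_sub_1. Qed.
Lemma M_neq0 : M != 0. Proof. by rewrite -size_poly_eq0 size_M. Qed.

Lemma size_modM p : (size (p %% M)%R <= n)%N.
Proof. by rewrite -ltnS -size_M ltn_modp M_neq0. Qed.

Lemma vpolyR p : vpoly (Rv p) = p %% M.
Proof. by rewrite pvecK // size_modM. Qed.

Lemma Rvpoly z : Rv (vpoly z) = z.
Proof. by rewrite /Rv modp_small ?vpolyK // size_M ltnS size_vpoly. Qed.

Lemma Rv_eq p q : (Rv p == Rv q) = (M %| p - q).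
Proof.
apply/eqP/idP => [e|d].
  have := congr1 (@vpoly F n) e; rewrite !vpolyR => e2.
  by apply/modp_eq0P; rewrite modpD modpN e2 subrr.
rewrite /Rv; congr (pvec n _); apply/eqP; rewrite -subr_eq0 -modpN -modpD.
exact/eqP/modp_eq0P.
Qed.

Lemma RvZ a p : Rv (a *: p) = a *: Rv p.
Proof. by rewrite /Rv modpZl pvecZ. Qed.

Lemma dvd_Xsub1 m a : ('X^m - 1 : {poly F}) %| 'X^(m * a) - 1.
Proof. by rewrite exprM (subrX1 ('X^m)) dvdp_mulIl. Qed.

Lemma mod_small_dvd d p r : d %| p - r -> (size r < size d)%N -> p %% d = r.
Proof.
move=> dv sr; have -> : p = (p - r) %/ d * d + r by rewrite divpK // subrK.
by rewrite modp_addl_mul_small.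
Qed.

Lemma dvd_Xmod (d : {poly F}) N m : d %| 'X^N - 1 -> d %| 'X^m - 'X^(m %% N).
Proof.
move=> dN; rewrite {1}(divn_eq m N) exprD -{2}['X^(m %% N)]mul1r -mulrBl.
by rewrite dvdp_mulr // mulnC (dvdp_trans dN) // dvd_Xsub1.
Qed.

Lemma XmodM m : 'X^m %% M = 'X^(m %% n).
Proof.
apply: mod_small_dvd; last by rewrite size_M size_polyXn ltnS ltn_pmod.
exact: dvd_Xmod (dvdpp _).
Qed.

Lemma RvXmod m p : Rv ('X^m * p) = Rv ('X^(m %% n) * p).
Proof. by apply/eqP; rewrite Rv_eq -mulrBl dvdp_mulr // dvd_Xmod. Qed.

Lemma Rv_mod m p : Rv ('X^m * (p %% M)) = Rv ('X^m * p).
Proof. by rewrite /Rv modp_mul. Qed.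

Lemma Xdiff i j : (i <= j)%N -> ('X^j - 'X^i : {poly F}) = ('X^(j - i) - 1) * 'X^i.
Proof. by move=> ij; rewrite mulrBl mul1r -exprD subnK. Qed.

Lemma coef_pvec p (j : 'I_n) : (pvec n p) 0 j = p`_j.
Proof. by rewrite mxE. Qed.

Lemma coef_vpoly v (j : 'I_n) : (vpoly v)`_j = v 0 j.
Proof. by rewrite vpolyE coef_rVpoly_ord. Qed.

Lemma coef_shift i p (k : 'I_n) : (size p <= n)%N ->
  (('X^i * p) %% M)`_((k + i) %% n) = p`_k.
Proof.
move=> sp; rewrite -{1}(pvecK sp) /vpoly mulr_sumr.
rewrite (big_morph (fun q => q %% M) (modpD M) (mod0p M)) coef_sum.
rewrite (bigD1 k) //= big1 ?addr0.
  by rewrite -scalerAr -exprD modpZl XmodM coefZ coefXn addnC eqxx mulr1 coef_pvec.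
move=> j jk; rewrite -scalerAr -exprD modpZl XmodM coefZ coefXn addnC.
case: eqP => [e|]; last by rewrite mulr0.
move/eqP: e; rewrite eqn_modDl !modn_small // => /eqP/val_inj jk2.
by rewrite jk2 eqxx in jk.
Qed.

Definition rot (i : nat) (k : 'I_n) : 'I_n := Ordinal (ltn_pmod (k + i) n0).

Lemma rot_inj i : injective (rot i).
Proof.
move=> a b /(congr1 val) /= /eqP; rewrite eqn_modDr !modn_small //.
by move/eqP/val_inj.
Qed.

Lemma hweight_shift i z : hweight (Rv ('X^i * vpoly z)) = hweight z.
Proof.
rewrite /hweight -(card_preimset _ (@rot_inj i)); apply: eq_card => k.
rewrite !inE coef_pvec /= coef_shift ?size_vpoly //.
by rewrite coef_vpoly.
Qed.

Lemma hweightZ a z : a != 0 -> hweight (a *: z) = hweight z.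
Proof.
move=> a0; rewrite /hweight; apply: eq_card => k.
by rewrite !inE mxE mulf_eq0 negb_or a0.
Qed.

End Mod.
Section Ann.
Variables (F : finFieldType) (n : nat).
Hypothesis n0 : (0 < n)%N.
Local Notation M := (xn1 F n).
Implicit Types (v w z : 'rV[F]_n) (p q r P Q : {poly F}).

Lemma dvdp_modE (d x : {poly F}) : (d %| x) = (x %% d == 0).
Proof. by apply/idP/eqP => [/modp_eq0P|/modp_eq0P]. Qed.

Lemma ann w Q : (M %| Q * vpoly w) = (min_poly w %| Q).
Proof.
rewrite /min_poly; set Z := vpoly w; set g := gcdp Z M.
have g0 : g != 0 by rewrite gcdp_eq0 (negbTE (M_neq0 F n0)) andbF.
have l0 : lead_coef g != 0 by rewrite lead_coef_eq0.
rewrite divpZr ?invr_eq0 // invrK dvdpZl //.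
have eM : M = M %/ g * g by rewrite divpK // dvdp_gcdr.
have eZ : Z = Z %/ g * g by rewrite divpK // dvdp_gcdl.
rewrite {1}eM {1}eZ mulrA dvdp_mul2r // Gauss_dvdpl //.
rewrite coprimep_sym; apply: coprimep_div_gcd.
by rewrite (M_neq0 F n0) orbT.
Qed.

Lemma min_poly_monic w : min_poly w \is monic.
Proof.
rewrite /min_poly; set Z := vpoly w; set g := gcdp Z M.
have g0 : g != 0 by rewrite gcdp_eq0 (negbTE (M_neq0 F n0)) andbF.
have l0 : lead_coef g != 0 by rewrite lead_coef_eq0.
have gm : (lead_coef g)^-1 *: g \is monic.
  by apply/monicP; rewrite lead_coefZ mulVf.
have dM : (lead_coef g)^-1 *: g %| M by rewrite dvdpZl ?invr_eq0 // dvdp_gcdr.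
have Mm : M \is monic by rewrite /xn1 -polyC1 monicXnsubC.
by move: Mm; rewrite -{1}(divpK dM) monicMr.
Qed.

Lemma min_poly_dvdM w : min_poly w %| M.
Proof. by rewrite -ann dvdp_mulr. Qed.

Lemma min_poly_eq w z : (forall Q, (M %| Q * vpoly w) = (M %| Q * vpoly z)) ->
  min_poly w = min_poly z.
Proof.
move=> e; apply/eqP; rewrite -eqp_monic ?min_poly_monic //.
apply/andP; split; first by rewrite -ann e ann dvdpp.
by rewrite -ann -e ann dvdpp.
Qed.

Lemma coprimeM_X : coprimep M 'X.
Proof.
have -> : ('X : {poly F}) = 'X - 0%:P by rewrite subr0.
rewrite coprimep_XsubC /root /xn1 !hornerE expr0n eqn0Ngt n0 /=.
by rewrite sub0r oppr_eq0 oner_eq0.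
Qed.

Lemma coprime_dvdM_Xn d i : d %| M -> coprimep d ('X^i).
Proof. by move=> dM; apply: coprimep_expr; apply: coprimep_dvdr dM coprimeM_X. Qed.

Lemma vpoly_orb a i z : vpoly (a *: Rv n ('X^i * vpoly z)) = a *: (('X^i * vpoly z) %% M).
Proof. by rewrite vpolyZ vpolyR. Qed.

Lemma ann_orb a i z Q : a != 0 ->
  (M %| Q * vpoly (a *: Rv n ('X^i * vpoly z))) = (M %| Q * vpoly z).
Proof.
move=> a0; rewrite vpoly_orb -scalerAr dvdpZr // dvdp_modE modp_mul -dvdp_modE.
by rewrite mulrA !ann Gauss_dvdpl // coprime_dvdM_Xn // min_poly_dvdM.
Qed.

Lemma min_poly_orb a i z : a != 0 ->
  min_poly (a *: Rv n ('X^i * vpoly z)) = min_poly z.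
Proof. by move=> a0; apply: min_poly_eq => Q; rewrite ann_orb. Qed.

End Ann.

Lemma count_classes (T : finType) (A : {set T}) (f : T -> {set T}) k :
  (forall z, z \in A -> z \in f z) ->
  (forall z w, z \in A -> w \in f z -> w \in A /\ f w = f z) ->
  (forall z, z \in A -> #|f z| = k) -> #|A| = (#|f @: A| * k)%N.
Proof.
move=> self cl ck.
rewrite -sum1_card (partition_big_imset f) /= -sum_nat_const.
apply: eq_bigr => Z /imsetP[z zA ->].
rewrite -(ck z zA) -sum1_card; apply: eq_bigl => w.
apply/andP/idP => [[wA /eqP <-]|wf]; first exact: self.
by have [-> ->] := cl z w zA wf.
Qed.
Section Main.
Variables (F : finFieldType) (n : nat).
Hypothesis n0 : (0 < n)%N.
Local Notation M := (xn1 F n).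
Variables (H c : {poly F}) (N : nat).
Hypothesis HM : H %| M.
Hypothesis cN : c %| 'X^N - 1.
Hypothesis cmin : forall e, (0 < e)%N -> (e < N)%N -> ~~ (c %| 'X^e - 1).
Hypothesis N0 : (0 < N)%N.
Hypothesis csize : (1 < size c)%N.
Local Notation C := (elts_minpoly n H c).
Local Notation Rv := (Rv n).
Implicit Types (v w z : 'rV[F]_n) (p q r P Q : {poly F}).

Lemma C_mp z : z \in C -> min_poly z = c.
Proof. by rewrite inE => /andP[_ /eqP]. Qed.

Lemma annC z Q : z \in C -> (M %| Q * vpoly z) = (c %| Q).
Proof. by move=> zC; rewrite ann // C_mp. Qed.

Lemma C_orb z a i : z \in C -> a != 0 -> a *: Rv ('X^i * vpoly z) \in C.
Proof.
move=> zC a0; have mz := C_mp zC; move: zC; rewrite !inE => /andP[zc _].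
rewrite min_poly_orb // mz eqxx andbT vpoly_orb // dvdpZr //.
have dM : M %/ H %| M by rewrite -{2}(divpK HM) dvdp_mulr.
by rewrite -dvdp_mod // dvdp_mull.
Qed.

Lemma C_sh z i : z \in C -> Rv ('X^i * vpoly z) \in C.
Proof. by move=> zC; rewrite -[Rv _]scale1r C_orb ?oner_eq0. Qed.

Lemma C_sc z a : z \in C -> a != 0 -> a *: z \in C.
Proof.
by move=> zC a0; have := C_orb 0 zC a0; rewrite expr0 mul1r Rvpoly.
Qed.

Lemma C_neq0 z : z \in C -> z != 0.
Proof.
move=> zC; apply/negP => /eqP z0.
have := annC 1 zC; rewrite z0.
have -> : vpoly (0 : 'rV[F]_n) = 0 by apply/eqP; rewrite vpoly_eq0.
by rewrite mulr0 dvdp0 dvdp1 => /esym/eqP sc; move: csize; rewrite sc.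
Qed.

Lemma cM z : z \in C -> c %| M.
Proof. by move=> zC; rewrite -(C_mp zC) min_poly_dvdM. Qed.

Lemma N_le_n z : z \in C -> (N <= n)%N.
Proof.
move=> zC; rewrite leqNgt; apply/negP => nN.
by have := cmin n0 nN; rewrite (cM zC).
Qed.

Lemma RvE p : pvec n (p %% M) = Rv p. Proof. by []. Qed.

Lemma cycle_in z j : Rv ('X^j * vpoly z) \in cycle_of z.
Proof. by rewrite RvXmod //; apply/imsetP; exists (Ordinal (ltn_pmod j n0)). Qed.

Lemma cycle_self z : z \in cycle_of z.
Proof. by have := cycle_in z 0; rewrite expr0 mul1r Rvpoly. Qed.

Lemma cycle_mem z w : w \in cycle_of z -> cycle_of w = cycle_of z.
Proof.
case/imsetP => i _ ->; apply/eqP; rewrite eqEsubset; apply/andP; split;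
  apply/subsetP => x /imsetP[j _ ->].
  by rewrite !RvE vpolyR // Rv_mod // mulrA -exprD cycle_in.
rewrite !RvE.
have <- : Rv ('X^(j + n.-1 * i) * vpoly (Rv ('X^i * vpoly z))) = Rv ('X^j * vpoly z).
  rewrite vpolyR // Rv_mod // mulrA -exprD -addnA -mulSnr prednK // RvXmod //.
  by rewrite [in RHS]RvXmod // addnC mulnC modnMDl.
exact: cycle_in.
Qed.

Lemma RvXmodN z m : z \in C -> Rv ('X^m * vpoly z) = Rv ('X^(m %% N) * vpoly z).
Proof. by move=> zC; apply/eqP; rewrite Rv_eq // -mulrBl annC // dvd_Xmod. Qed.

Lemma shift_inj z i j : z \in C -> (i < N)%N -> (j < N)%N ->
  Rv ('X^i * vpoly z) = Rv ('X^j * vpoly z) -> i = j.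
Proof.
move=> zC; wlog ij : i j / (i <= j)%N.
  move=> W iN jN e; case: (leqP i j) => [h|/ltnW h]; first exact: W.
  by apply/esym/W.
move=> iN jN /eqP; rewrite eq_sym Rv_eq // -mulrBl annC // Xdiff //.
rewrite Gauss_dvdpl; last by apply: (coprime_dvdM_Xn n0); exact: cM zC.
case: (posnP (j - i)) => [/eqP|ji0].
  by rewrite subn_eq0 => ji _; apply/eqP; rewrite eqn_leq ij ji.
by rewrite (negbTE (cmin ji0 _)) // (leq_ltn_trans (leq_subr _ _) jN).
Qed.

Lemma card_cycle z : z \in C -> #|cycle_of z| = N.
Proof.
move=> zC; have Nn := N_le_n zC.
have -> : cycle_of z = [set Rv ('X^(val i) * vpoly z) | i : 'I_N].
  apply/eqP; rewrite eqEsubset; apply/andP; split; apply/subsetP => x /imsetP[i _ ->].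
    rewrite RvE (RvXmodN _ zC); apply/imsetP; by exists (Ordinal (ltn_pmod i N0)).
  exact: cycle_in.
rewrite card_imset ?card_ord // => i j e.
exact/val_inj/(shift_inj zC (ltn_ord i) (ltn_ord j)).
Qed.

Lemma prop_self z : z \in prop_class z.
Proof. by apply/imsetP; exists 1; rewrite ?inE ?oner_eq0 ?scale1r. Qed.

Lemma prop_mem z w : w \in prop_class z -> prop_class w = prop_class z.
Proof.
case/imsetP => b; rewrite inE => b0 ->; apply/eqP; rewrite eqEsubset; apply/andP; split;
  apply/subsetP => x /imsetP[a]; rewrite inE => a0 ->.
  by apply/imsetP; exists (a * b); rewrite ?inE ?mulf_neq0 ?scalerA.
by apply/imsetP; exists (a / b); rewrite ?inE ?mulf_neq0 ?invr_eq0 // scalerA divfK.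
Qed.

Lemma card_prop z : z != 0 -> #|prop_class z| = (#|F| - 1)%N.
Proof.
move=> z0; rewrite card_in_imset.
  have -> : [set a : F | a != 0] = [set~ 0] by apply/setP => a; rewrite !inE.
  by rewrite cardsC1 subn1.
move=> a b _ _ /eqP; rewrite -subr_eq0 -scalerBl scaler_eq0 (negbTE z0) orbF subr_eq0.
by move/eqP.
Qed.


Definition cong P Q := c %| P - Q.

Lemma cong_refl P : cong P P. Proof. by rewrite /cong subrr dvdp0. Qed.
Lemma cong_sym P Q : cong P Q -> cong Q P.
Proof. by rewrite /cong -dvdpNr opprB. Qed.
Lemma cong_trans P Q R : cong P Q -> cong Q R -> cong P R.
Proof.
rewrite /cong => h1 h2; have -> : P - R = (P - Q) + (Q - R) by rewrite addrA subrK.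
exact: dvdp_add.
Qed.
Lemma cong_mul P P' Q Q' : cong P P' -> cong Q Q' -> cong (P * Q) (P' * Q').
Proof.
rewrite /cong => h1 h2.
have -> : P * Q - P' * Q' = P * (Q - Q') + (P - P') * Q'.
  by rewrite mulrBr mulrBl addrA subrK.
by apply: dvdp_add; [apply: dvdp_mull | apply: dvdp_mulr].
Qed.
Lemma cong_exp P Q k : cong P Q -> cong (P ^+ k) (Q ^+ k).
Proof.
move=> h; elim: k => [|k IH]; first by rewrite !expr0 cong_refl.
by rewrite !exprS cong_mul.
Qed.

Lemma cst_dvd a : c %| a%:P -> a = 0.
Proof.
move=> d; case: (eqVneq a 0) => // a0.
have nz : a%:P != 0 by rewrite polyC_eq0.
have := dvdp_leq nz d.
by rewrite size_polyC a0 leqNgt csize.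
Qed.

Lemma cong_cst a b : cong a%:P b%:P -> a = b.
Proof. by rewrite /cong -polyCB => /cst_dvd /eqP; rewrite subr_eq0 => /eqP. Qed.

Lemma coprime_cX i : coprimep c ('X^i).
Proof.
apply: coprimep_expr; apply: coprimep_dvdr cN _.
have -> : ('X : {poly F}) = 'X - 0%:P by rewrite subr0.
rewrite coprimep_XsubC /root !hornerE oppr0 expr0n eqn0Ngt N0 /=.
by rewrite sub0r oppr_eq0 oner_eq0.
Qed.

Lemma cong_cancelX P Q i : cong (P * 'X^i) (Q * 'X^i) -> cong P Q.
Proof. by rewrite /cong -mulrBl Gauss_dvdpl // coprime_cX. Qed.

Definition Pe e := (0 < e)%N && [exists a : F, (a != 0) && cong ('X^e) a%:P].
Lemma exPe : exists e, Pe e.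
Proof.
exists N; rewrite /Pe N0; apply/existsP; exists 1.
by rewrite oner_eq0 polyC1.
Qed.
Definition e0 := ex_minn exPe.
Lemma e0P : Pe e0 /\ forall m, Pe m -> (e0 <= m)%N.
Proof. by rewrite /e0; case: ex_minnP => m Pm mmin; split. Qed.

Lemma cong_inj a b i j : a != 0 -> b != 0 -> (i < e0)%N -> (j < e0)%N ->
  cong (a *: 'X^i) (b *: 'X^j) -> a = b /\ i = j.
Proof.
wlog ij : a b i j / (i <= j)%N.
  move=> W a0 b0 iN jN h; case: (leqP i j) => [l|/ltnW l]; first exact: W.
  by have [-> ->] := W b a j i l b0 a0 jN iN (cong_sym h).
move=> a0 b0 iN jN.
have -> : b *: 'X^j = (b *: 'X^(j - i)) * 'X^i by rewrite -scalerAl -exprD subnK.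
rewrite -mul_polyC => /cong_cancelX h.
case: (posnP (j - i)) => [ji|ji0].
  move: h; rewrite ji expr0 alg_polyC => /cong_cst ->; split=> //.
  by apply/eqP; rewrite eqn_leq ij -subn_eq0 ji.
have h2 : cong ('X^(j - i)) (b^-1 * a)%:P.
  have := cong_mul (cong_refl (b^-1)%:P) (cong_sym h).
  by rewrite -scalerAr mul_polyC scalerA divff // scale1r polyCM.
have : Pe (j - i).
  by rewrite /Pe ji0; apply/existsP; exists (b^-1 * a); rewrite mulf_neq0 ?invr_eq0.
move/(proj2 e0P); rewrite leqNgt => /negP; case.
exact: leq_ltn_trans (leq_subr _ _) jN.
Qed.

Lemma cong_XN : cong ('X^N) 1. Proof. exact: cN. Qed.

Lemma e0_bound : (N <= e0 * gcdn (#|F| - 1) N)%N.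
Proof.
have [/andP[e0pos /existsP[a0 /andP[a00 ca]]] e0min] := e0P.
have powk k : cong ('X^(k * e0)) (a0%:P ^+ k) by rewrite mulnC exprM cong_exp.
have dN : (e0 %| N)%N.
  have [rz|r0] := posnP (N %% e0)%N; first by apply/eqP.
  set r := (N %% e0)%N in r0 *.
  have hr : cong ('X^r) ((a0^-1) ^+ (N %/ e0)%N)%:P.
    have h1 : cong ('X^(N %/ e0 * e0) * 'X^r) 1 by rewrite -exprD -divn_eq cong_XN.
    have h2 := cong_trans (cong_mul (cong_sym (powk (N %/ e0)%N)) (cong_refl 'X^r)) h1.
    have := cong_mul (cong_refl ((a0^-1) ^+ (N %/ e0)%N)%:P) h2.
    by rewrite mulrA -polyC_exp -polyCM -exprMn mulVf // expr1n polyC1 mul1r mulr1.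
  have : Pe r.
    rewrite /Pe r0; apply/existsP; exists ((a0^-1) ^+ (N %/ e0)%N).
    by rewrite expf_neq0 ?invr_eq0 ?hr.
  by move/e0min; rewrite leqNgt ltn_pmod.
set m := (N %/ e0)%N.
have Nm : N = (m * e0)%N by rewrite divnK.
have m0 : (0 < m)%N by move: N0; rewrite Nm muln_gt0 => /andP[].
have Am : a0 ^+ m = 1.
  apply: cong_cst; rewrite polyC_exp polyC1.
  by apply: cong_trans (cong_sym (powk m)) _; rewrite -Nm cong_XN.
have ordm m' : (0 < m')%N -> (m' < m)%N -> a0 ^+ m' != 1.
  move=> m'0 m'm; apply/negP => /eqP am'.
  have : cong ('X^(m' * e0)) 1 by have := powk m'; rewrite -polyC_exp am' polyC1.
  apply/negP; apply: cmin; first by rewrite muln_gt0 m'0.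
  by rewrite Nm ltn_pmul2r.
have aQ : a0 ^+ (#|F| - 1) = 1.
  have cF : (0 < #|F|)%N by apply/card_gt0P; exists 0.
  have := expf_card a0; rewrite -{1}(subnK cF) addn1 exprS => h.
  by apply: (mulfI a00); rewrite mulr1.
have mQ : (m %| #|F| - 1)%N.
  have [rz|r0] := posnP ((#|F| - 1) %% m)%N; first by apply/eqP.
  set r := ((#|F| - 1) %% m)%N in r0 *.
  have : a0 ^+ r = 1.
    by move: aQ; rewrite {1}(divn_eq (#|F| - 1) m) exprD mulnC exprM Am expr1n mul1r.
  by move/eqP; rewrite (negbTE (ordm r r0 _)) // ltn_pmod.
have mg : (m <= gcdn (#|F| - 1) N)%N.
  by apply: dvdn_leq; rewrite ?gcdn_gt0 ?N0 ?orbT // dvdn_gcd mQ Nm dvdn_mulr.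
by rewrite {1}Nm mulnC leq_mul2l mg orbT.
Qed.

Definition orbf z (p : F * 'I_e0) := p.1 *: Rv ('X^(val p.2) * vpoly z).
Definition Orb z := orbf z @: [set p : F * 'I_e0 | p.1 != 0].

Lemma Orb_sub z : z \in C -> Orb z \subset C.
Proof.
move=> zC; apply/subsetP => x /imsetP[[a i]]; rewrite inE /= => a0 ->.
exact: C_orb.
Qed.

Lemma card_Orb z : z \in C -> #|Orb z| = ((#|F| - 1) * e0)%N.
Proof.
move=> zC; rewrite card_in_imset.
  have -> : [set p : F * 'I_e0 | p.1 != 0] = setX [set~ 0] [set: 'I_e0].
    by apply/setP => -[a i]; rewrite !inE andbT.
  by rewrite cardsX cardsC1 cardsT card_ord subn1.
move=> [a i] [b j]; rewrite !inE /= => a0 b0 /eqP.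
rewrite /orbf /= -!RvZ Rv_eq // !scalerAl -mulrBl annC // => /cong_inj.
by case/(_ a0 b0 (ltn_ord i) (ltn_ord j)) => -> /val_inj ->.
Qed.

Lemma all_in_orb u v : u \in C -> v \in C -> (#|C| <= (#|F| - 1) * e0)%N ->
  exists a i, a != 0 /\ v = a *: Rv ('X^i * vpoly u).
Proof.
move=> uC vC le; have e : Orb u = C by apply/eqP; rewrite eqEcard Orb_sub // card_Orb.
by move: vC; rewrite -e => /imsetP[[a i]]; rewrite inE /= => a0 ->; exists a, i.
Qed.


Lemma card_C_cycles : #|C| = (num_cycles C * N)%N.
Proof.
apply: count_classes => [z _|z w zC wz|z zC]; [exact: cycle_self| |exact: card_cycle].
split; last exact: cycle_mem wz.
by case/imsetP: wz => i _ ->; rewrite RvE C_sh.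
Qed.

Lemma card_C_props : #|C| = (num_prop_classes C * (#|F| - 1))%N.
Proof.
apply: count_classes => [z _|z w zC wz|z zC]; [exact: prop_self| |exact/card_prop/C_neq0].
split; last exact: prop_mem wz.
by case/imsetP: wz => a; rewrite inE => a0 ->; rewrite C_sc.
Qed.

End Main.

Local Open Scope nat_scope.
Lemma arith Q N s R e : (0 < Q)%N -> (0 < N)%N -> (s * N = R * Q)%N ->
  (N <= e * gcdn Q N)%N ->
  [|| s == Q %/ gcdn Q N, N %/ gcdn Q N == R | coprime s R] -> (R <= e)%N.
Proof.
move=> Q0 N0 sN Ne; set g := gcdn Q N in Ne *.
have g0 : (0 < g)%N by rewrite gcdn_gt0 Q0.
have gQ : (g %| Q)%N by apply: dvdn_gcdl.
have gN : (g %| N)%N by apply: dvdn_gcdr.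
case/or3P => [/eqP sE|/eqP <-|cop].
- rewrite -(leq_pmul2r Q0) -sN sE.
  have -> : (e * Q = Q %/ g * (e * g))%N by rewrite mulnCA divnK // mulnC.
  by rewrite leq_mul2l Ne orbT.
- by rewrite leq_divLR.
- have [->//|R0] := posnP R.
  have s0 : (0 < s)%N.
    by rewrite lt0n; apply/eqP => s0; move: sN; rewrite s0 mul0n => /esym/eqP; rewrite muln_eq0 eqn0Ngt R0 eqn0Ngt Q0.
  have sQ : (s %| Q)%N by rewrite -(Gauss_dvdr _ cop) -sN dvdn_mulr.
  set m := (Q %/ s)%N.
  have Qm : Q = (s * m)%N by rewrite mulnC divnK.
  have Nm : N = (R * m)%N.
    by apply/eqP; rewrite -(eqn_pmul2l s0) sN Qm mulnCA.
  have gm : g = m by rewrite /g Qm Nm -!(mulnC m) -muln_gcdr (eqP cop) muln1.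
  have m0 : (0 < m)%N by move: Q0; rewrite Qm muln_gt0 => /andP[].
  by move: Ne; rewrite gm Nm leq_pmul2r.
Qed.

Local Open Scope ring_scope.
Lemma order_dvd (F : finFieldType) (f : {poly F}) o e :
  poly_order f o -> f %| 'X^e - 1 -> (o %| e)%N.
Proof.
case=> o0 fo omin fe.
have [rz|r0] := posnP (e %% o)%N; first by apply/eqP.
have h := dvd_Xmod e fo.
have : f %| 'X^(e %% o) - 1.
  have -> : ('X^(e %% o) - 1 : {poly F}) = ('X^e - 1) - ('X^e - 'X^(e %% o)).
    by rewrite opprB [in RHS]addrC [in RHS]addrA subrK.
  exact: dvdp_sub.
by move/negP: (omin _ r0 (ltn_pmod _ o0)).
Qed.

Lemma coprime_irr (F : finFieldType) (p q : {poly F}) :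
  irreducible_poly p -> irreducible_poly q -> p \is monic -> q \is monic ->
  p != q -> coprimep p q.
Proof.
move=> [sp ip] [sq iq] mp mq pq; rewrite coprimep_def.
case: (eqVneq (size (gcdp p q)) 1%N) => // sg.
have h1 := ip _ sg (dvdp_gcdl p q); have h2 := iq _ sg (dvdp_gcdr p q).
have : p %= q by rewrite eqp_sym in h1; apply: eqp_trans h1 h2.
by rewrite eqp_monic // (negbTE pq).
Qed.

Lemma prod_dvd (F : finFieldType) (I : eqType) (s : seq I) (f : I -> {poly F}) Q :
  uniq s -> (forall i, i \in s -> f i %| Q) ->
  {in s &, forall i j, i != j -> coprimep (f i) (f j)} -> \prod_(i <- s) f i %| Q.
Proof.
elim: s => [|x s IH] /=; first by rewrite big_nil dvd1p.
case/andP => xs us hd hc; rewrite big_cons Gauss_dvdp.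
  rewrite hd ?mem_head //=; apply: IH => // [i iS|i j iS jS]; first by rewrite hd // inE iS orbT.
  by apply: hc; rewrite inE ?iS ?jS orbT.
rewrite big_seq; apply: (big_ind (coprimep (f x))) => //.
- exact: coprimep1.
- by move=> a b ha hb; rewrite coprimepMr ha hb.
move=> i iS; apply: hc; rewrite ?inE ?eqxx ?iS ?orbT //.
by apply: contraNneq xs => ->.
Qed.

Unset Implicit Arguments.
Local Open Scope ring_scope.

Theorem corollary7 (F : finFieldType) (n t k : nat)
    (h : 'I_t -> {poly F}) (idx : 'I_k -> 'I_t) (ord : 'I_k -> nat) :
  (2 < #|F|)%N -> (0 < n)%N -> coprime n #|F| ->
  injective h -> (forall i, h i \is monic) -> (forall i, irreducible_poly (h i)) ->
  (\prod_i h i) %| xn1 F n ->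
  (1 < k)%N -> injective idx ->
  (forall j, poly_order (h (idx j)) (ord j)) ->
  (forall j, ord j != (#|F| ^ (size (h (idx j))).-1 - 1)%N) ->
  let C := elts_minpoly n (\prod_i h i) (\prod_j h (idx j)) in
  let nc := \big[lcmn/1%N]_j ord j in
  let dc := gcdn (#|F| - 1) nc in
  let rc := (nc %/ dc)%N in
  let bc := ((#|F| - 1) %/ dc)%N in
  let sc := num_cycles C in
  let Rc := num_prop_classes C in
  [|| sc == bc, rc == Rc | coprime sc Rc] ->
  forall u v, u \in C -> v \in C -> hweight u = hweight v.
Proof.
move=> F2 n0 _ hinj hmon hirr HM k1 idxinj hord _ C nc dc rc bc sc Rc cond u v uC vC.
set c := \prod_j h (idx j).
have N0 : (0 < nc)%N.
  rewrite /nc; apply: (big_ind (fun m => 0 < m)%N) => // [a b a0 b0|j _].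
    by rewrite lcmn_gt0 a0 b0.
  by case: (hord j).
have cN : c %| 'X^nc - 1.
  apply: (prod_dvd (index_enum_uniq _)) => [j _|i j _ _ ij].
    have [o0 ho _] := hord j; apply: dvdp_trans ho _.
    have d : (ord j %| nc)%N by apply: (biglcmn_sup j).
    by rewrite -(divnK d) mulnC dvd_Xsub1.
  apply: coprime_irr; rewrite ?hirr ?hmon //.
  by apply/negP => /eqP/hinj/idxinj/eqP; rewrite (negbTE ij).
have cmin : forall e, (0 < e)%N -> (e < nc)%N -> ~~ (c %| 'X^e - 1).
  move=> e e0 enc; apply/negP => ce.
  have : (nc %| e)%N.
    apply/dvdn_biglcmP => j _; apply: order_dvd (hord j) _.
    by apply: dvdp_trans ce; rewrite /c (bigD1 j) //= dvdp_mulIl.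
  by move/(dvdn_leq e0); rewrite leqNgt enc.
have csize : (1 < size c)%N.
  have k0 : (0 < k)%N by apply: ltnW.
  pose j0 : 'I_k := Ordinal k0.
  have hc : h (idx j0) %| c by rewrite /c (bigD1 j0) //= dvdp_mulIl.
  have c0 : c != 0 by apply: monic_neq0; apply: monic_prod => j _; exact: hmon.
  have [sh _] := hirr (idx j0).
  exact: leq_trans sh (dvdp_leq c0 hc).
have Q0 : (0 < #|F| - 1)%N by rewrite subn_gt0 ltnW.
have Rle : (Rc <= e0 cN N0)%N.
  move: cond; rewrite /bc /rc /dc => cond.
  apply: (arith Q0 N0 _ (e0_bound cN cmin N0 csize) cond).
  by rewrite /sc /Rc -(card_C_cycles n0 HM cN cmin N0) (card_C_props n0 HM csize).
have le : (#|C| <= (#|F| - 1) * e0 cN N0)%N.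
  by rewrite (card_C_props n0 HM csize) mulnC leq_mul2l Rle orbT.
have [a [i [a0 ->]]] := @all_in_orb F n n0 _ c nc HM cN N0 csize u v uC vC le.
by rewrite hweightZ // hweight_shift.
Qed.
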